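(* Let $n\geq 1$. Each of the following four statements is equivalent to the inequality $d_n^2 < 2p_{n+1}$ (equivalently, $d_n < \sqrt{2}\,(p_{n+1})^{1/2}$): 1. $p_n > d_n\left(\frac{d_n}{2} - 1\right)$; 2. $\displaystyle \sum_{i=1}^{d_n} i \;-\; \sum_{i=1}^{n} d_i \;<\; \frac{d_n}{2} + 2$; 3. $\displaystyle (p_{n+1})^{1/2} < \left(p_n + \tfrac12\right)^{1/2} + \tfrac{\sqrt2}{2}$; 4. $\displaystyle \left(1 + \frac{1}{2p_n}\right)p_{n+1} < \left(\sqrt{p_n} + \frac{\sqrt2}{2}\sqrt{\frac{p_{n+1}}{p_n}}\right)^2$.
   Context: $p_n$ denotes the $n$th prime ($p_1=2$), and $d_n := p_{n+1}-p_n$ is the $n$th prime gap (so $d_1=1$, $d_2=2$). *)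

(* Defs.v *)
From mathcomp Require Import all_boot all_order all_algebra.
Set Implicit Arguments. Unset Strict Implicit. Unset Printing Implicit Defensive.

Lemma exists_prime_above (m : nat) : exists q, (m < q) && prime q.
Proof. by case: (prime_above m) => q Hq Pq; exists q; rewrite Hq Pq. Qed.

Definition next_prime (m : nat) : nat := ex_minn (exists_prime_above m).

Fixpoint prime0 (k : nat) : nat :=
  match k with 0 => 2 | k'.+1 => next_prime (prime0 k') end.

(* p_n : the n-th prime, 1-indexed (p_1 = 2); p 0 is a junk value *)
Definition p (n : nat) : nat := prime0 n.-1.

Definition d (n : nat) : nat := p n.+1 - p n.

(* Main.v *)
Require Import Defs.
From mathcomp Require Import all_boot all_order all_algebra.
From mathcomp Require Import ring lra.
Import Order.TTheory GRing.Theory Num.Theory.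
Local Open Scope ring_scope.

Lemma next_prime_spec m : (m < next_prime m)%N /\ prime (next_prime m).
Proof. rewrite /next_prime; case: ex_minnP => q /andP[h1 h2] _; by split. Qed.

Lemma prime0_prime k : prime (prime0 k).
Proof. case: k => [//|k] /=; exact: (next_prime_spec _).2. Qed.

Lemma p_ge2 n : (2 <= p n)%N.
Proof. exact: prime_gt1 (prime0_prime _). Qed.

Lemma p_lt n : (1 <= n)%N -> (p n < p n.+1)%N.
Proof. case: n => [//|n] _; rewrite /p /=; exact: (next_prime_spec _).1. Qed.

Lemma sum_d (R : rcfType) n :
  \sum_(1 <= i < n.+1) ((d i)%:R : R) = (p n.+1)%:R - 2.
Proof.
elim: n => [|n IH]; first by rewrite big_geq // /p /= subrr.
rewrite big_nat_recr //= IH /d natrB; last exact/ltnW/p_lt.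
ring.
Qed.

Lemma sum_i (R : rcfType) m :
  \sum_(1 <= i < m.+1) (i%:R : R) = m%:R * (m%:R + 1) / 2.
Proof.
elim: m => [|m IH]; first by rewrite big_geq // mul0r mul0r.
rewrite big_nat_recr //= IH -addn1 natrD.
by field.
Qed.

Lemma sq_lt (R : rcfType) (x y : R) : 0 <= x -> 0 <= y -> (x < y) = (x ^+ 2 < y ^+ 2).
Proof. by move=> hx hy; rewrite ltr_sqr ?nnegrE. Qed.

Theorem theorem1p5 (R : rcfType) (n : nat) (hn : (1 <= n)%N) :
  let P := (d n ^ 2 < 2 * p n.+1)%N in
  let dn : R := (d n)%:R in
  let pn : R := (p n)%:R in
  let pn1 : R := (p n.+1)%:R in
  [/\ P <-> pn > dn * (dn / 2 - 1),
      P <-> (\sum_(1 <= i < (d n).+1) (i%:R : R))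
              - (\sum_(1 <= i < n.+1) ((d i)%:R : R)) < dn / 2 + 2,
      P <-> Num.sqrt pn1 < Num.sqrt (pn + 2^-1) + Num.sqrt 2 / 2
    & P <-> (1 + (2 * pn)^-1) * pn1
              < (Num.sqrt pn + Num.sqrt 2 / 2 * Num.sqrt (pn1 / pn)) ^+ 2].
Proof.
move=> P dn pn pn1.
have hlt := @p_lt n hn.
have hb : pn1 = pn + dn by rewrite /pn1 /pn /dn /d -natrD subnKC // ltnW.
have hd1 : 1 <= dn by rewrite /dn ler1n /d subn_gt0.
have hp2 : 2 <= pn by rewrite /pn ler_nat p_ge2.
have hP : P <-> dn ^+ 2 < 2 * pn1.
  by rewrite /P /dn /pn1 -natrX -natrM ltr_nat.
rewrite sum_i sum_d.
split.
- rewrite hP hb; split => H; nra.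
- rewrite hP -/pn1; split => H; nra.
- have hpn0 : 0 <= pn by lra.
  set q := Num.sqrt (pn + 2^-1); set s := Num.sqrt 2.
  have hq0 : 0 <= q := sqrtr_ge0 _.
  have hs0 : 0 <= s := sqrtr_ge0 _.
  have hq2 : q ^+ 2 = pn + 2^-1 by rewrite sqr_sqrtr //; lra.
  have hs2 : s ^+ 2 = 2 by rewrite sqr_sqrtr //; lra.
  have hr2 : (q * s) ^+ 2 = 2 * pn + 1 by rewrite exprMn hq2 hs2; field.
  have hr0 : 0 <= q * s by apply: mulr_ge0.
  rewrite (@sq_lt _ _ _ (sqrtr_ge0 _)); last lra.
  rewrite sqr_sqrtr; last lra.
  have -> : (q + s / 2) ^+ 2 = q ^+ 2 + q * s + s ^+ 2 / 4 by field.
  rewrite hq2 hs2 hP.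
  have -> : (pn1 < pn + 2^-1 + q * s + 2 / 4) = (dn - 1 < q * s).
    by rewrite hb; apply/idP/idP => H; lra.
  rewrite (@sq_lt _ _ _ _ hr0); last lra.
  rewrite hr2 hb; split => H; nra.
- have hpn0 : 0 < pn by lra.
  set u := Num.sqrt pn; set v := Num.sqrt (pn1 / pn); set s := Num.sqrt 2.
  have hs0 : 0 <= s := sqrtr_ge0 _.
  have hu2 : u ^+ 2 = pn by rewrite sqr_sqrtr //; lra.
  have hs2 : s ^+ 2 = 2 by rewrite sqr_sqrtr //; lra.
  have hv2 : v ^+ 2 = pn1 / pn by rewrite sqr_sqrtr // divr_ge0 //; lra.
  have huv : u * v = Num.sqrt pn1.
    rewrite /u /v -sqrtrM; last lra.
    congr Num.sqrt; field; lra.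
  have hsb0 : 0 <= s * Num.sqrt pn1 by apply: mulr_ge0; rewrite ?sqrtr_ge0.
  have ht2 : (s * Num.sqrt pn1) ^+ 2 = 2 * pn1.
    by rewrite exprMn hs2 sqr_sqrtr //; lra.
  have -> : (u + s / 2 * v) ^+ 2 = u ^+ 2 + s * (u * v) + s ^+ 2 / 4 * v ^+ 2.
    by field.
  rewrite hu2 huv hs2 hv2.
  set t := s * Num.sqrt pn1.
  rewrite -subr_lt0.
  have -> : (1 + (2 * pn)^-1) * pn1 - (pn + t + 2 / 4 * (pn1 / pn))
            = pn1 - pn - t by field; lra.
  rewrite subr_lt0 hP.
  have -> : (pn1 - pn < t) = (dn < t) by rewrite hb; apply/idP/idP => H; lra.
  rewrite (@sq_lt _ _ _ _ hsb0); last lra.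
  by rewrite ht2.
Qed.
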